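(* Let $X$ be a pseudotopological space (resp. an epitopological space) and $m\colon X\times X\to X$ a continuous map. Then the induced map $\mu\colon\pi_0^{\mathrm{ps}}X\times\pi_0^{\mathrm{ps}}X\to\pi_0^{\mathrm{ps}}X$ (resp. $\mu\colon\pi_0^{\mathrm{epi}}X\times\pi_0^{\mathrm{epi}}X\to\pi_0^{\mathrm{epi}}X$), given by $\mu([x],[y])=[m(x,y)]$ where $[\cdot]$ denotes path component, is continuous.
   Context: For a set $X$, $U(X)$ is the set of ultrafilters on $X$, $\dot x$ the principal ultrafilter at $x$; for $f\colon X\to Y$, $f_*\mathscr F=\{S\subset Y:f^{-1}(S)\in\mathscr F\}$. A pseudotopological space is a set $X$ with a relation $u\subset U(X)\times X$ containing all $(\dot x,x)$; write $\mathscr U\to x$; for a filter $\mathscr F$, $\mathscr F\to x$ means every ultrafilter containing $\mathscr F$ converges to $x$. Continuous maps: $\mathscr U\to x\Rightarrow f_*\mathscr U\to f(x)$. Products carry the initial structure: $\mathscr U\to (x_j)$ iff $(p_j)_*\mathscr U\to x_j$ for all projections $p_j$. Final structure for $q\colon X\to Z$: $\mathscr U\to z$ iff $\mathscr U=\dot z$ or $\mathscr U=q_*\mathscr V$, $z=q(x)$ with $\mathscr V\to x$. Topological spaces are regarded as pseudotopological via ultrafilter convergence. For pseudotopological $X,Y$, $Y^X$ is the set of continuous maps with: a filter $\mathscr F\to f$ iff for every filter $\mathscr G\to x$ in $X$, $\mathrm{ev}_*(\mathscr F\times\mathscr G)\to f(x)$. A pseudotopological space is epitopological if its structure is initial w.r.t.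 some family of maps $X\to Z_j^{Y_j}$ with $Y_j,Z_j$ topological; products of epitopological spaces (in the category of epitopological spaces) are their products as pseudotopological spaces. A path is a continuous map from $[0,1]$ with its usual topology. $\pi_0^{\mathrm{ps}}X$: set of path components with the final pseudotopology w.r.t. the projection. For epitopological $X$, $\pi_0^{\mathrm{epi}}X$: set of path components with the smallest epitopological structure making the projection continuous. *)

(* Defs.v *)
From Stdlib Require Import Reals Lra.
Open Scope R_scope.

Definition setsys (T : Type) := (T -> Prop) -> Prop.

Definition is_filter {T : Type} (F : setsys T) : Prop :=
  F (fun _ => True) /\
  (forall A B : T -> Prop, F A -> (forall x, A x -> B x) -> F B) /\
  (forall A B : T -> Prop, F A -> F B -> F (fun x => A x /\ B x)) /\
  ~ F (fun _ => False).

Definition is_ultrafilter {T : Type} (U : setsys T) : Prop :=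
  is_filter U /\ forall A : T -> Prop, U A \/ U (fun x => ~ A x).

Definition principal {T : Type} (x : T) : setsys T := fun A => A x.

Definition push {A B : Type} (f : A -> B) (F : setsys A) : setsys B :=
  fun S => F (fun a => S (f a)).

Definition filprod {A B : Type} (F : setsys A) (G : setsys B) : setsys (A * B) :=
  fun S => exists (P : A -> Prop) (Q : B -> Prop),
    F P /\ G Q /\ forall a b, P a -> Q b -> S (a, b).

(** * Pseudotopological structures
    A convergence relation; only its values on ultrafilters matter. *)
Definition conv_rel (T : Type) := setsys T -> T -> Prop.

Definition has_principal {T : Type} (c : conv_rel T) : Prop :=
  forall x : T, c (principal x) x.

Record pstop := PStop {
  pcar :> Type;
  pconv : conv_rel pcar;
  pconv_principal : has_principal pconv }.

Definition filconv {T : Type} (c : conv_rel T) (F : setsys T) (x : T) : Prop :=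
  forall U, is_ultrafilter U -> (forall S, F S -> U S) -> c U x.

Definition continuous {A B : Type} (ca : conv_rel A) (cb : conv_rel B)
    (f : A -> B) : Prop :=
  forall (U : setsys A) (x : A), is_ultrafilter U -> ca U x -> cb (push f U) (f x).

Definition prod_conv {A B : Type} (ca : conv_rel A) (cb : conv_rel B)
    : conv_rel (A * B) :=
  fun U p => ca (push fst U) (fst p) /\ cb (push snd U) (snd p).

Record topspace := TopSpace {
  tcar :> Type;
  topen : (tcar -> Prop) -> Prop;
  topen_full : topen (fun _ => True);
  topen_inter : forall A B, topen A -> topen B -> topen (fun x => A x /\ B x);
  topen_union : forall (I : Type) (A : I -> tcar -> Prop),
      (forall i, topen (A i)) -> topen (fun x => exists i, A i x) }.

Definition top_conv (Y : topspace) : conv_rel Y :=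
  fun U x => forall O, topen Y O -> O x -> U O.

Definition fspace {X Y : Type} (cx : conv_rel X) (cy : conv_rel Y) : Type :=
  { g : X -> Y | continuous cx cy g }.

Definition fev {X Y : Type} {cx : conv_rel X} {cy : conv_rel Y}
    (p : fspace cx cy * X) : Y := proj1_sig (fst p) (snd p).

(** a filter F converges to f iff for all filters G -> x,
    ev_*(F x G) -> f(x); we use it for ultrafilters F. *)
Definition fspace_conv {X Y : Type} (cx : conv_rel X) (cy : conv_rel Y)
    : conv_rel (fspace cx cy) :=
  fun F f => forall (G : setsys X) (x : X), is_filter G -> filconv cx G x ->
    filconv cy (push (@fev X Y cx cy) (filprod F G)) (proj1_sig f x).

(** * Epitopological structures: initial w.r.t. a family of maps
      X -> Z_j^{Y_j}, Y_j, Z_j topological *)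
Definition is_epi {T : Type} (c : conv_rel T) : Prop :=
  exists (J : Type) (Y Z : J -> topspace)
         (f : forall j : J, T -> fspace (top_conv (Y j)) (top_conv (Z j))),
    forall (U : setsys T) (x : T), is_ultrafilter U ->
      (c U x <-> forall j : J,
         fspace_conv (top_conv (Y j)) (top_conv (Z j)) (push (f j) U) (f j x)).

Definition I01 : Type := { t : R | 0 <= t <= 1 }.

Definition I01_conv : conv_rel I01 :=
  fun U t => forall eps : R, 0 < eps ->
    U (fun s : I01 => Rabs (proj1_sig s - proj1_sig t) < eps).

Lemma I01_0_prf : 0 <= 0 <= 1. Proof. lra. Qed.
Lemma I01_1_prf : 0 <= 1 <= 1. Proof. lra. Qed.
Definition I01_0 : I01 := exist _ 0 I01_0_prf.
Definition I01_1 : I01 := exist _ 1 I01_1_prf.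

Definition path_between (X : pstop) (x y : X) : Prop :=
  exists g : I01 -> X, continuous I01_conv (pconv X) g /\
    g I01_0 = x /\ g I01_1 = y.

Definition pi0 (X : pstop) : Type :=
  { C : X -> Prop | exists x : X, C = path_between X x }.

Definition pcls (X : pstop) (x : X) : pi0 X :=
  exist _ (path_between X x) (ex_intro _ x eq_refl).

(** pi_0^ps X: final pseudotopology w.r.t. the projection *)
Definition pi0ps_conv (X : pstop) : conv_rel (pi0 X) :=
  fun U z => (forall S, U S <-> principal z S) \/
    exists (V : setsys X) (x : X), is_ultrafilter V /\ pconv X V x /\
      z = pcls X x /\ (forall S, U S <-> push (pcls X) V S).

(** pi_0^epi X: smallest epitopological structure (i.e. with fewest
    convergent pairs) on pi0 X making the projection continuous;
    it is the intersection of all such structures. *)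
Definition pi0epi_conv (X : pstop) : conv_rel (pi0 X) :=
  fun U z => forall c : conv_rel (pi0 X),
    has_principal c -> is_epi c -> continuous (pconv X) c (pcls X) -> c U z.

(* Main.v *)
Require Import Defs.
From Stdlib Require Import Reals.
From Stdlib Require Import Lra Classical ProofIrrelevance FunctionalExtensionality PropExtensionality ClassicalEpsilon.
From mathcomp Require classical_sets filter.
Set Bullet Behavior "Strict Subproofs".
Open Scope R_scope.

Lemma UFL {T : Type} (F : setsys T) : is_filter F ->
  exists U, is_ultrafilter U /\ forall S, F S -> U S.
Proof.
intros [h1 [h2 [h3 h4]]].
assert (PF : filter.ProperFilter F).
{ constructor.
  - exact h4.
  - constructor.
    + exact h1.
    + intros A B; exact (h3 A B).
    + intros P Q hPQ hP; exact (h2 P Q hP hPQ). }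
destruct (filter.ultraFilterLemma PF) as [G [HG HFG]].
exists G; split.
- pose proof HG as HG0. destruct HG0 as [[n0 [g1 g2 g3]] _]. split.
  + split; [exact g1|]. split; [intros A B hA hAB; exact (g3 A B hAB hA)|].
    split; [intros A B; exact (g2 A B)| exact n0].
  + intros A. exact (filter.in_ultra_setVsetC A HG).
- intros S hS; exact (HFG S hS).
Qed.

Lemma setsys_ext {T} (F G : setsys T) : (forall S, F S <-> G S) -> F = G.
Proof. intros h; apply functional_extensionality; intros S; apply propositional_extensionality; apply h. Qed.

Lemma uf_filter {T} (U : setsys T) : is_ultrafilter U -> is_filter U.
Proof. intros [h _]; exact h. Qed.

Lemma f_true {T} (U : setsys T) : is_filter U -> U (fun _ => True).
Proof. intros [h _]; exact h. Qed.

Lemma f_mono {T} (U : setsys T) : is_filter U -> forall A B : T -> Prop, U A -> (forall x, A x -> B x) -> U B.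
Proof. intros [_ [h _]]; exact h. Qed.

Lemma f_inter {T} (U : setsys T) : is_filter U -> forall A B : T -> Prop, U A -> U B -> U (fun x => A x /\ B x).
Proof. intros [_ [_ [h _]]]; exact h. Qed.

Lemma f_ne {T} (U : setsys T) : is_filter U -> forall S, U S -> exists x, S x.
Proof.
intros hU S hS. apply NNPP; intro hn. destruct hU as [_ [hm [_ hp]]].
apply hp. apply (hm S); auto. intros x hx; apply hn; eauto.
Qed.

Lemma uf_const {T} (U : setsys T) (P : Prop) : is_ultrafilter U -> (U (fun _ : T => P) <-> P).
Proof.
intros hU; split.
- intros h. destruct (f_ne U (uf_filter U hU) _ h) as [x hx]; exact hx.
- intros hp. apply (f_mono U (uf_filter U hU) (fun _ => True)); auto. apply f_true, uf_filter, hU.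
Qed.

Lemma push_filter {A B} (f : A -> B) (U : setsys A) : is_filter U -> is_filter (push f U).
Proof.
intros hU. unfold push. split; [|split; [|split]].
- apply f_true, hU.
- intros P Q hP hPQ. apply (f_mono U hU _ _ hP). intros x; apply hPQ.
- intros P Q hP hQ. apply (f_inter U hU _ _ hP hQ).
- destruct hU as [_ [_ [_ h]]]; exact h.
Qed.

Lemma push_ultra {A B} (f : A -> B) (U : setsys A) : is_ultrafilter U -> is_ultrafilter (push f U).
Proof.
intros hU. split; [apply push_filter, uf_filter, hU|].
intros P. unfold push. destruct hU as [_ h]. apply (h (fun a => P (f a))).
Qed.

Lemma filprod_filter {A B} (F : setsys A) (G : setsys B) : is_filter F -> is_filter G -> is_filter (filprod F G).
Proof.
intros hF hG. unfold filprod. split; [|split; [|split]].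
- exists (fun _ => True), (fun _ => True). split; [apply f_true, hF|]. split; [apply f_true, hG|]. auto.
- intros P Q [P1 [Q1 [h1 [h2 h3]]]] hPQ. exists P1, Q1. split; auto.
- intros P Q [P1 [Q1 [h1 [h2 h3]]]] [P2 [Q2 [k1 [k2 k3]]]].
  exists (fun a => P1 a /\ P2 a), (fun b => Q1 b /\ Q2 b).
  split; [apply f_inter; auto|]. split; [apply f_inter; auto|].
  intros a b [] []; split; auto.
- intros [P1 [Q1 [h1 [h2 h3]]]].
  destruct (f_ne F hF _ h1) as [a ha]. destruct (f_ne G hG _ h2) as [b hb]. exact (h3 a b ha hb).
Qed.

Lemma principal_ultra {T} (x : T) : is_ultrafilter (principal x).
Proof.
unfold principal. split; [split; [|split; [|split]]|].
- exact I.
- intros A B hA hAB; auto.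
- intros A B hA hB; split; auto.
- auto.
- intros A; apply classic.
Qed.

Lemma ultra_sub {T} (U1 U2 : setsys T) : is_ultrafilter U1 -> is_ultrafilter U2 ->
  (forall S, U1 S -> U2 S) -> forall S, U2 S <-> U1 S.
Proof.
intros h1 h2 hs S; split; [|auto].
intros hS. destruct (proj2 h1 S) as [|hn]; auto.
apply hs in hn. exfalso.
destruct (f_ne U2 (uf_filter _ h2) _ (f_inter U2 (uf_filter _ h2) _ _ hS hn)) as [x [a b]]. auto.
Qed.

Lemma L1 (Y : topspace) (F : setsys Y) (y : Y) : is_filter F -> filconv (top_conv Y) F y ->
  forall O, topen Y O -> O y -> F O.
Proof.
intros hF hc O hO hOy. apply NNPP; intro hn.
set (F' := fun Q : Y -> Prop => exists A, F A /\ forall x, A x -> ~ O x -> Q x).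
assert (hF' : is_filter F').
{ unfold F'. split; [|split; [|split]].
  - exists (fun _ => True). split; auto. apply f_true, hF.
  - intros P Q [A [h1 h2]] hPQ. exists A. split; auto.
  - intros P Q [A [h1 h2]] [B [k1 k2]]. exists (fun x => A x /\ B x). split; [apply f_inter; auto|].
    intros x [] hx; split; auto.
  - intros [A [h1 h2]]. apply hn. apply (f_mono F hF A); auto.
    intros x hx. apply NNPP; intro; apply (h2 x); auto. }
destruct (UFL F' hF') as [U [hU hsub]].
assert (hUO : U O).
{ apply (hc U hU); auto. intros S hS; apply hsub. exists S; split; auto. }
assert (hUn : U (fun x => ~ O x)).
{ apply hsub. exists (fun _ => True). split; [apply f_true, hF|]. auto. }
destruct (f_ne U (uf_filter _ hU) _ (f_inter U (uf_filter _ hU) _ _ hUO hUn)) as [x [a b]]. auto.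
Qed.

Lemma L2 (Y Z : topspace) (h : Y -> Z) : continuous (top_conv Y) (top_conv Z) h ->
  forall y O, topen Z O -> O (h y) -> exists R, topen Y R /\ R y /\ forall y', R y' -> O (h y').
Proof.
intros hc y O hO hOy. apply NNPP; intro hn.
set (F := fun Q : Y -> Prop => exists R, topen Y R /\ R y /\ forall y', R y' -> ~ O (h y') -> Q y').
assert (hF : is_filter F).
{ unfold F. split; [|split; [|split]].
  - exists (fun _ => True). split; [apply topen_full|]. auto.
  - intros P Q [A [h1 [h2 h3]]] hPQ. exists A. split; auto.
  - intros P Q [A [h1 [h2 h3]]] [B [k1 [k2 k3]]]. exists (fun x => A x /\ B x).
    split; [apply topen_inter; auto|]. split; [auto|].
    intros x [] hx; split; auto.
  - intros [A [h1 [h2 h3]]]. apply hn. exists A. split; auto. split; auto.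
    intros y' hy'. apply NNPP; intro; apply (h3 y'); auto. }
destruct (UFL F hF) as [U [hU hsub]].
assert (hconv : top_conv Y U y).
{ intros O' hO' hy. apply hsub. exists O'. split; auto. }
assert (hUO : U (fun x => O (h x))) by exact (hc U y hU hconv O hO hOy).
assert (hUn : U (fun x => ~ O (h x))).
{ apply hsub. exists (fun _ => True). split; [apply topen_full|]. auto. }
destruct (f_ne U (uf_filter _ hU) _ (f_inter U (uf_filter _ hU) _ _ hUO hUn)) as [x [a b]]. auto.
Qed.

Lemma open_cont (Y Z : topspace) (h : Y -> Z) :
  (forall O, topen Z O -> topen Y (fun p => O (h p))) -> continuous (top_conv Y) (top_conv Z) h.
Proof.
intros ho U y hU hc O hO hOy. unfold push. apply hc; auto.
Qed.

Lemma FE (A : Type) (Y Z : topspace) (g : A -> fspace (top_conv Y) (top_conv Z)) (U : setsys A) (a : A) :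
  is_filter U -> fspace_conv (top_conv Y) (top_conv Z) (push g U) (g a) ->
  forall y O, topen Z O -> O (proj1_sig (g a) y) ->
  exists P R, U P /\ topen Y R /\ R y /\ forall a' y', P a' -> R y' -> O (proj1_sig (g a') y').
Proof.
intros hU hfc y O hO hOy.
set (G := fun Q : Y -> Prop => exists R, topen Y R /\ R y /\ forall y', R y' -> Q y').
assert (hG : is_filter G).
{ unfold G. split; [|split; [|split]].
  - exists (fun _ => True). split; [apply topen_full|]. auto.
  - intros P Q [B [h1 [h2 h3]]] hPQ. exists B. split; auto.
  - intros P Q [B [h1 [h2 h3]]] [C [k1 [k2 k3]]]. exists (fun x => B x /\ C x).
    split; [apply topen_inter; auto|]. split; [auto|].
    intros x []; split; auto.
  - intros [B [h1 [h2 h3]]]. exact (h3 y h2). }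
assert (hGc : filconv (top_conv Y) G y).
{ intros V hV hsub O' hO' hy. apply hsub. exists O'. split; auto. }
pose proof (hfc G y hG hGc) as hev.
assert (hEf : is_filter (push (@fev Y Z (top_conv Y) (top_conv Z)) (filprod (push g U) G))).
{ apply push_filter, filprod_filter; auto. apply push_filter; auto. }
pose proof (L1 Z _ _ hEf hev O hO hOy) as hin.
destruct hin as [P [Q [hP [hQ hall]]]].
destruct hQ as [R [hR [hRy hRQ]]].
exists (fun a' => P (g a')), R. split; [exact hP|]. split; [auto|]. split; [auto|].
intros a' y' h1 h2. exact (hall (g a') y' h1 (hRQ y' h2)).
Qed.

Lemma FE' (A : Type) (Y Z : topspace) (g : A -> fspace (top_conv Y) (top_conv Z)) (U : setsys A) (a : A) :
  is_filter U ->
  (forall y O, topen Z O -> O (proj1_sig (g a) y) ->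
    exists P R, U P /\ topen Y R /\ R y /\ forall a' y', P a' -> R y' -> O (proj1_sig (g a') y')) ->
  fspace_conv (top_conv Y) (top_conv Z) (push g U) (g a).
Proof.
intros hU hcond G y hG hGc V hV hsub O hO hOy.
destruct (hcond y O hO hOy) as [P [R [hP [hR [hRy hall]]]]].
apply hsub. exists (fun f => exists a', P a' /\ f = g a'), R.
split.
- unfold push. apply (f_mono U hU P); auto. intros x hx; exists x; auto.
- split.
  + exact (L1 Y G y hG hGc R hR hRy).
  + intros f y' [a' [h1 ->]] h2. exact (hall a' y' h1 h2).
Qed.

Lemma fs_principal (A : Type) (Y Z : topspace) (g : A -> fspace (top_conv Y) (top_conv Z)) (a : A) :
  fspace_conv (top_conv Y) (top_conv Z) (push g (principal a)) (g a).
Proof.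
apply FE'; [apply uf_filter, principal_ultra|].
intros y O hO hOy.
destruct (L2 Y Z _ (proj2_sig (g a)) y O hO hOy) as [R [hR [hRy hsub]]].
exists (fun a' => a' = a), R. split; [reflexivity|]. split; auto. split; auto.
intros a' y' -> h. apply hsub; auto.
Qed.
Open Scope R_scope.

Lemma I01_eq (a b : I01) : proj1_sig a = proj1_sig b -> a = b.
Proof. destruct a as [a ha], b as [b hb]; simpl; intros ->. f_equal; apply proof_irrelevance. Qed.

Definition clampR (t : R) : R := Rmax 0 (Rmin 1 t).
Lemma clamp_prf t : 0 <= clampR t <= 1.
Proof. unfold clampR, Rmax, Rmin; repeat destruct Rle_dec; lra. Qed.
Definition clamp (t : R) : I01 := exist _ (clampR t) (clamp_prf t).
Lemma clamp_lip a b : Rabs (clampR a - clampR b) <= Rabs (a - b).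
Proof. unfold clampR, Rmax, Rmin; repeat destruct Rle_dec; unfold Rabs; repeat destruct Rcase_abs; lra. Qed.
Lemma clampR_val t : 0 <= t <= 1 -> clampR t = t.
Proof. intros h; unfold clampR, Rmax, Rmin; repeat destruct Rle_dec; lra. Qed.

Lemma lip_cont (phi : I01 -> I01) :
  (forall a b, Rabs (proj1_sig (phi a) - proj1_sig (phi b)) <= 2 * Rabs (proj1_sig a - proj1_sig b)) ->
  continuous I01_conv I01_conv phi.
Proof.
intros hl U t hU ht eps he. unfold push.
apply (f_mono U (uf_filter _ hU) _ _ (ht (eps / 2) ltac:(lra))).
intros s hs. specialize (hl s t). lra.
Qed.

Definition phi1 (s : I01) : I01 := clamp (2 * proj1_sig s).
Definition phi2 (s : I01) : I01 := clamp (2 * proj1_sig s - 1).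
Definition rev01 (s : I01) : I01 := clamp (1 - proj1_sig s).

Lemma phi1_cont : continuous I01_conv I01_conv phi1.
Proof. apply lip_cont. intros a b. unfold phi1, clamp; simpl.
  eapply Rle_trans; [apply clamp_lip|]. unfold Rabs; repeat destruct Rcase_abs; lra. Qed.
Lemma phi2_cont : continuous I01_conv I01_conv phi2.
Proof. apply lip_cont. intros a b. unfold phi2, clamp; simpl.
  eapply Rle_trans; [apply clamp_lip|]. unfold Rabs; repeat destruct Rcase_abs; lra. Qed.
Lemma rev_cont : continuous I01_conv I01_conv rev01.
Proof. apply lip_cont. intros a b. unfold rev01, clamp; simpl.
  eapply Rle_trans; [apply clamp_lip|]. unfold Rabs; repeat destruct Rcase_abs; lra. Qed.

Lemma cont_comp {A B C} (ca : conv_rel A) (cb : conv_rel B) (cc : conv_rel C) f g :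
  continuous ca cb f -> continuous cb cc g -> continuous ca cc (fun a => g (f a)).
Proof. intros hf hg U x hU hx. apply (hg (push f U) (f x)); [apply push_ultra; auto| apply hf; auto]. Qed.

Lemma path_refl (X : pstop) (x : X) : path_between X x x.
Proof.
exists (fun _ => x). split; [|split; reflexivity].
intros U t hU _.
replace (push (fun _ : I01 => x) U) with (principal x).
- apply pconv_principal.
- apply setsys_ext. intros S. unfold push, principal. symmetry. apply uf_const; auto.
Qed.

Lemma path_sym (X : pstop) (x y : X) : path_between X x y -> path_between X y x.
Proof.
intros [g [hg [h0 h1]]]. exists (fun s => g (rev01 s)). split.
- apply (cont_comp _ I01_conv); [apply rev_cont | exact hg].
- split.
  + rewrite <- h1. f_equal. apply I01_eq. unfold rev01, clamp; simpl. rewrite clampR_val; lra.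
  + rewrite <- h0. f_equal. apply I01_eq. unfold rev01, clamp; simpl. rewrite clampR_val; lra.
Qed.

Lemma path_trans (X : pstop) (x y z : X) : path_between X x y -> path_between X y z -> path_between X x z.
Proof.
intros [g [hg [g0 g1]]] [h [hh [h0 h1]]].
set (k := fun s : I01 => if Rle_dec (proj1_sig s) (1/2) then g (phi1 s) else h (phi2 s)).
exists k. split; [|split].
- intros U t hU ht.
  destruct (proj2 hU (fun s : I01 => proj1_sig s <= 1/2)) as [hA|hA].
  + assert (tle : proj1_sig t <= 1/2).
    { apply NNPP; intro hn.
      destruct (f_ne U (uf_filter _ hU) _ (f_inter U (uf_filter _ hU) _ _ hA (ht (proj1_sig t - 1/2) ltac:(lra)))) as [s [s1 s2]].
      unfold Rabs in s2; destruct Rcase_abs in s2; lra. }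
    assert (E : push k U = push g (push phi1 U)).
    { apply setsys_ext; intros S; unfold push; split; intro hS;
      apply (f_mono U (uf_filter _ hU) _ _ (f_inter U (uf_filter _ hU) _ _ hA hS));
      intros s [s1 s2]; unfold k in *; destruct Rle_dec; try contradiction; exact s2. }
    rewrite E. replace (k t) with (g (phi1 t)) by (unfold k; destruct Rle_dec; [reflexivity|lra]).
    apply hg; [apply push_ultra; auto| apply phi1_cont; auto].
  + assert (tge : proj1_sig t >= 1/2).
    { apply NNPP; intro hn.
      destruct (f_ne U (uf_filter _ hU) _ (f_inter U (uf_filter _ hU) _ _ hA (ht (1/2 - proj1_sig t) ltac:(lra)))) as [s [s1 s2]].
      unfold Rabs in s2; destruct Rcase_abs in s2; lra. }
    assert (E : push k U = push h (push phi2 U)).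
    { apply setsys_ext; intros S; unfold push; split; intro hS;
      apply (f_mono U (uf_filter _ hU) _ _ (f_inter U (uf_filter _ hU) _ _ hA hS));
      intros s [s1 s2]; unfold k in *; destruct Rle_dec; try contradiction; exact s2. }
    rewrite E. replace (k t) with (h (phi2 t)).
    * apply hh; [apply push_ultra; auto| apply phi2_cont; auto].
    * unfold k; destruct Rle_dec; [|reflexivity].
      assert (ht2 : proj1_sig t = 1/2) by lra.
      replace (phi1 t) with I01_1 by (apply I01_eq; unfold phi1, clamp; simpl; rewrite ht2; rewrite clampR_val; lra).
      replace (phi2 t) with I01_0 by (apply I01_eq; unfold phi2, clamp; simpl; rewrite ht2; rewrite clampR_val; lra).
      congruence.
- unfold k. destruct Rle_dec as [r|r]; [|simpl in r; lra].
  rewrite <- g0. f_equal. apply I01_eq. unfold phi1, clamp; simpl. rewrite clampR_val; lra.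
- unfold k. destruct Rle_dec as [r|r]; [simpl in r; lra|].
  rewrite <- h1. f_equal. apply I01_eq. unfold phi2, clamp; simpl. rewrite clampR_val; lra.
Qed.

Lemma path_m (X : pstop) (m : X * X -> X) :
  continuous (prod_conv (pconv X) (pconv X)) (pconv X) m ->
  forall x x' y y', path_between X x x' -> path_between X y y' -> path_between X (m (x, y)) (m (x', y')).
Proof.
intros hm x x' y y' [g [hg [g0 g1]]] [h [hh [h0 h1]]].
exists (fun t => m (g t, h t)). split; [|split; [rewrite g0, h0; reflexivity| rewrite g1, h1; reflexivity]].
intros U t hU ht. apply (hm (push (fun t => (g t, h t)) U) (g t, h t)); [apply push_ultra; auto|].
split; [apply hg; auto| apply hh; auto].
Qed.

Lemma pi0_eq (X : pstop) (C D : pi0 X) : proj1_sig C = proj1_sig D -> C = D.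
Proof. destruct C, D; simpl; intros ->; f_equal; apply proof_irrelevance. Qed.

Lemma pcls_eq (X : pstop) (x y : X) : path_between X x y -> pcls X x = pcls X y.
Proof.
intros hp. apply pi0_eq. simpl. apply functional_extensionality; intros z.
apply propositional_extensionality; split; intros hz.
- apply (path_trans X _ x); [apply path_sym|]; auto.
- apply (path_trans X _ y); auto.
Qed.

Lemma pcls_path (X : pstop) (x y : X) : pcls X x = pcls X y -> path_between X x y.
Proof.
intros E. apply (f_equal (@proj1_sig _ _)) in E. simpl in E. rewrite E. apply path_refl.
Qed.

Definition rep (X : pstop) (C : pi0 X) : X :=
  proj1_sig (constructive_indefinite_description _ (proj2_sig C)).

Lemma rep_spec (X : pstop) (C : pi0 X) : pcls X (rep X C) = C.
Proof.
apply pi0_eq. unfold rep. destruct (constructive_indefinite_description _ (proj2_sig C)) as [x hx].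
simpl. symmetry; exact hx.
Qed.

Definition mu (X : pstop) (m : X * X -> X) (p : pi0 X * pi0 X) : pi0 X :=
  pcls X (m (rep X (fst p), rep X (snd p))).

Lemma mu_spec (X : pstop) (m : X * X -> X) :
  continuous (prod_conv (pconv X) (pconv X)) (pconv X) m ->
  forall x y, mu X m (pcls X x, pcls X y) = pcls X (m (x, y)).
Proof.
intros hm x y. unfold mu; simpl. apply pcls_eq. apply path_m; auto; apply pcls_path; apply rep_spec.
Qed.

Lemma lift_ps (X : pstop) (U : setsys (pi0 X)) (C : pi0 X) : pi0ps_conv X U C ->
  exists V x, is_ultrafilter V /\ pconv X V x /\ C = pcls X x /\ U = push (pcls X) V.
Proof.
intros [h | [V [x [hV [hx [hC hU]]]]]].
- exists (principal (rep X C)), (rep X C). split; [apply principal_ultra|].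
  split; [apply pconv_principal|]. split; [symmetry; apply rep_spec|].
  apply setsys_ext; intros S. rewrite h. unfold push, principal. rewrite rep_spec. tauto.
- exists V, x. split; auto. split; auto. split; auto. apply setsys_ext; auto.
Qed.

Lemma part1 (X : pstop) (m : X * X -> X) :
  continuous (prod_conv (pconv X) (pconv X)) (pconv X) m ->
  continuous (prod_conv (pi0ps_conv X) (pi0ps_conv X)) (pi0ps_conv X) (mu X m).
Proof.
intros hm W [C D] hW [h1 h2]. simpl in h1, h2.
destruct (lift_ps X _ _ h1) as [V1 [x1 [hV1 [hx1 [hC E1]]]]].
destruct (lift_ps X _ _ h2) as [V2 [x2 [hV2 [hx2 [hD E2]]]]].
subst C D.
set (F := fun Sx : X * X -> Prop => exists A B E, V1 A /\ V2 B /\ W E /\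
   forall a b, A a -> B b -> E (pcls X a, pcls X b) -> Sx (a, b)).
assert (hF : is_filter F).
{ unfold F. split; [|split; [|split]].
  - exists (fun _ => True), (fun _ => True), (fun _ => True).
    split; [apply f_true, uf_filter, hV1|]. split; [apply f_true, uf_filter, hV2|].
    split; [apply f_true, uf_filter, hW|]. auto.
  - intros P Q [A [B [E [k1 [k2 [k3 k4]]]]]] hPQ. exists A, B, E. split; auto.
  - intros P Q [A [B [E [k1 [k2 [k3 k4]]]]]] [A' [B' [E' [l1 [l2 [l3 l4]]]]]].
    exists (fun a => A a /\ A' a), (fun a => B a /\ B' a), (fun a => E a /\ E' a).
    split; [apply f_inter; auto; apply uf_filter; auto|].
    split; [apply f_inter; auto; apply uf_filter; auto|].
    split; [apply f_inter; auto; apply uf_filter; auto|].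
    intros a b [] [] []; split; auto.
  - intros [A [B [E [k1 [k2 [k3 k4]]]]]].
    assert (wA : W (fun p => exists a, A a /\ fst p = pcls X a)).
    { change (push fst W (fun c => exists a, A a /\ c = pcls X a)). rewrite E1. unfold push.
      apply (f_mono _ (uf_filter _ hV1) A); auto. intros a ha; exists a; auto. }
    assert (wB : W (fun p => exists b, B b /\ snd p = pcls X b)).
    { change (push snd W (fun c => exists b, B b /\ c = pcls X b)). rewrite E2. unfold push.
      apply (f_mono _ (uf_filter _ hV2) B); auto. intros a ha; exists a; auto. }
    pose proof (uf_filter _ hW) as hWf.
    destruct (f_ne W hWf _ (f_inter W hWf _ _ k3 (f_inter W hWf _ _ wA wB))) as [[c d] [he [[a [ha ea]] [b [hb eb]]]]].
    simpl in ea, eb. subst c d. exact (k4 a b ha hb he). }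
destruct (UFL F hF) as [V [hV hsub]].
assert (M1 : push fst V = V1).
{ apply setsys_ext; intros S. apply ultra_sub; auto; [apply push_ultra; auto|].
  intros S0 hS0. apply hsub. exists S0, (fun _ => True), (fun _ => True).
  split; auto. split; [apply f_true, uf_filter, hV2|]. split; [apply f_true, uf_filter, hW|]. auto. }
assert (M2 : push snd V = V2).
{ apply setsys_ext; intros S. apply ultra_sub; auto; [apply push_ultra; auto|].
  intros S0 hS0. apply hsub. exists (fun _ => True), S0, (fun _ => True).
  split; [apply f_true, uf_filter, hV1|]. split; auto. split; [apply f_true, uf_filter, hW|]. auto. }
assert (M3 : W = push (fun p => (pcls X (fst p), pcls X (snd p))) V).
{ apply setsys_ext; intros S. symmetry. apply ultra_sub; auto; [apply push_ultra; auto|].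
  intros S0 hS0. apply hsub. exists (fun _ => True), (fun _ => True), S0.
  split; [apply f_true, uf_filter, hV1|]. split; [apply f_true, uf_filter, hV2|]. split; auto. }
assert (pm : pconv X (push m V) (m (x1, x2))).
{ apply (hm V (x1, x2) hV). split; simpl; [rewrite M1 | rewrite M2]; auto. }
right. exists (push m V), (m (x1, x2)). split; [apply push_ultra; auto|]. split; auto.
split; [simpl; apply mu_spec; auto|].
intros S. rewrite M3. unfold push. split; intros h;
  (apply (f_mono V (uf_filter _ hV) _ _ h); intros [a b] hab; simpl in *;
   rewrite mu_spec in *; auto).
Qed.

Definition up_open {B : Type} (b0 : B) (V : setsys B) (S : topspace) (O : B * S -> Prop) : Prop :=
  forall b s, O (b, s) -> exists (A : B -> Prop) (R : S -> Prop), A b /\ (b = b0 -> V A) /\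
     topen S R /\ R s /\ forall b' s', A b' -> R s' -> O (b', s').

Lemma up_full {B} (b0 : B) V (S : topspace) : is_filter V -> up_open b0 V S (fun _ => True).
Proof.
intros hV b s _. exists (fun _ => True), (fun _ => True). split; auto. split; [intros; apply f_true; auto|].
split; [apply topen_full|]. auto.
Qed.

Lemma up_inter {B} (b0 : B) V (S : topspace) : is_filter V -> forall O1 O2, up_open b0 V S O1 -> up_open b0 V S O2 ->
  up_open b0 V S (fun x => O1 x /\ O2 x).
Proof.
intros hV O1 O2 h1 h2 b s [k1 k2].
destruct (h1 b s k1) as [A1 [R1 [a1 [v1 [r1 [s1 f1]]]]]].
destruct (h2 b s k2) as [A2 [R2 [a2 [v2 [r2 [s2 f2]]]]]].
exists (fun x => A1 x /\ A2 x), (fun x => R1 x /\ R2 x). split; auto.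
split; [intros e; apply f_inter; auto|]. split; [apply topen_inter; auto|]. split; auto.
intros b' s' [] []; split; auto.
Qed.

Lemma up_union {B} (b0 : B) V (S : topspace) : forall (I : Type) (O : I -> B * S -> Prop), (forall i, up_open b0 V S (O i)) ->
  up_open b0 V S (fun x => exists i, O i x).
Proof.
intros I O h b s [i hi]. destruct (h i b s hi) as [A [R [a [v [r [s1 f]]]]]].
exists A, R. repeat split; auto. intros b' s' h1 h2. exists i; auto.
Qed.

Definition up_top {B : Type} (b0 : B) (V : setsys B) (hV : is_filter V) (S : topspace) : topspace :=
  TopSpace (B * S) (up_open b0 V S) (up_full b0 V S hV) (up_inter b0 V S hV) (up_union b0 V S).

Lemma up_rect {B} (b0 : B) V (S : topspace) (A : B -> Prop) (R : S -> Prop) :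
  (A b0 -> V A) -> topen S R -> up_open b0 V S (fun p => A (fst p) /\ R (snd p)).
Proof.
intros hA hR b s [ha hr]. exists A, R. split; auto. split; [intros ->; auto|]. split; auto.
Qed.

Definition Jt (A : Type) (convA : setsys A -> A -> Prop) := {p : setsys A * A | convA (fst p) (snd p)}.


Lemma step (X : pstop) (S T : topspace) (A : Type) (convA : setsys A -> A -> Prop)
  (hAf : forall V a, convA V a -> is_filter V)
  (hAp : forall a, convA (principal a) a)
  (F : A -> pi0 X -> S -> T)
  (H : forall Va a V2 x2, convA Va a -> is_ultrafilter V2 -> pconv X V2 x2 ->
        forall s O, topen T O -> O (F a (pcls X x2) s) ->
        exists P Q R, Va P /\ V2 Q /\ topen S R /\ R s /\
          forall a' x' s', P a' -> Q x' -> R s' -> O (F a' (pcls X x') s')) :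
  forall Va a Ub b, convA Va a -> is_ultrafilter Ub -> pi0epi_conv X Ub b ->
    forall s O, topen T O -> O (F a b s) ->
    exists P Q R, Va P /\ Ub Q /\ topen S R /\ R s /\
      forall a' b' s', P a' -> Q b' -> R s' -> O (F a' b' s').
Proof.
set (Yk := fun k : Jt A convA => up_top (snd (proj1_sig k)) (fst (proj1_sig k)) (hAf _ _ (proj2_sig k)) S).
assert (local : forall (k : Jt A convA) x2 V2, is_ultrafilter V2 -> pconv X V2 x2 ->
   forall a s O, topen T O -> O (F a (pcls X x2) s) ->
   exists P (R : A * S -> Prop), V2 P /\ up_open (snd (proj1_sig k)) (fst (proj1_sig k)) S R /\ R (a, s) /\
     forall x' a' s', P x' -> R (a', s') -> O (F a' (pcls X x') s')).
{ intros [[Va a0] hk] x2 V2 hV2 hx2 a s O hO hOa. simpl.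
  pose proof (uf_filter _ hV2) as hV2f.
  destruct (classic (a = a0)) as [e|ne].
  - subst a.
    destruct (H Va a0 V2 x2 hk hV2 hx2 s O hO hOa) as [P1 [Q1 [R1 [p1 [q1 [r1 [s1 f1]]]]]]].
    destruct (H (principal a0) a0 V2 x2 (hAp a0) hV2 hx2 s O hO hOa) as [P0 [Q0 [R0 [p0 [q0 [r0 [s0 f0]]]]]]].
    exists (fun x => Q1 x /\ Q0 x), (fun p => (P1 (fst p) \/ fst p = a0) /\ (R1 (snd p) /\ R0 (snd p))).
    split; [apply f_inter; auto|]. split.
    + apply (up_rect a0 Va S (fun x => P1 x \/ x = a0) (fun y => R1 y /\ R0 y)); [|apply topen_inter; auto].
      intros _. apply (f_mono Va (hAf _ _ hk) P1); auto.
    + split; [simpl; auto|].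
      intros x' a' s' [qa qb] [[pa|pa] [ra rb]]; simpl in *.
      * apply f1; auto.
      * subst a'. apply f0; auto.
  - destruct (H (principal a) a V2 x2 (hAp a) hV2 hx2 s O hO hOa) as [P0 [Q0 [R0 [p0 [q0 [r0 [s0 f0]]]]]]].
    exists Q0, (fun p => fst p = a /\ R0 (snd p)). split; auto. split.
    + apply (up_rect a0 Va S (fun x => x = a) R0); auto. intros e; congruence.
    + split; [simpl; auto|].
      intros x' a' s' q [pa ra]; simpl in *. subst a'. apply f0; auto. }
assert (cont : forall k b, continuous (top_conv (Yk k)) (top_conv T) (fun p : A * S => F (fst p) b (snd p))).
{ intros k b. apply open_cont. intros O hO. simpl. intros a s hOa. simpl in hOa.
  rewrite <- (rep_spec X b) in hOa.
  destruct (local k (rep X b) (principal (rep X b)) (principal_ultra _) (pconv_principal X _) a s O hO hOa)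
    as [P [R [hP [hR [hRa hall]]]]].
  destruct (hR a s hRa) as [A0 [R0 [hA0 [hV [hR0 [hs hsub]]]]]].
  exists A0, R0. split; auto. split; auto. split; auto. split; auto.
  intros a' s' h1 h2. simpl. rewrite <- (rep_spec X b). apply (hall (rep X b)); auto. }
pose (psi := fun k b => exist (fun g => continuous (top_conv (Yk k)) (top_conv T) g)
   (fun p : A * S => F (fst p) b (snd p)) (cont k b)).
pose (cn := fun (U : setsys (pi0 X)) b => forall k, fspace_conv (top_conv (Yk k)) (top_conv T) (push (psi k) U) (psi k b)).
intros Va a Ub b hVa hUb hepi s O hO hOab.
assert (hcn : cn Ub b).
{ apply hepi.
  - intros b0 k. apply fs_principal.
  - exists (Jt A convA), Yk, (fun _ => T), psi. intros; unfold cn; tauto.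
  - intros V2 x2 hV2 hx2 k. apply FE'; [apply push_filter, uf_filter; auto|].
    intros [a1 s1] O1 hO1 hOa1. simpl in hOa1.
    destruct (local k x2 V2 hV2 hx2 a1 s1 O1 hO1 hOa1) as [P [R [hP [hR [hRa hall]]]]].
    exists (fun c => exists x', P x' /\ c = pcls X x'), R. split.
    + unfold push. apply (f_mono V2 (uf_filter _ hV2) P); auto. intros x hx; exists x; auto.
    + split; [exact hR|]. split; [exact hRa|].
      intros a' [a2 s2] [x' [hx' ->]] hR2. simpl. apply hall; auto. }
set (k := exist (fun p : setsys A * A => convA (fst p) (snd p)) (Va, a) hVa : Jt A convA).
destruct (FE _ _ _ (psi k) Ub b (uf_filter _ hUb) (hcn k) (a, s) O hO hOab) as [P [R [hP [hR [hRa hall]]]]].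
destruct (hR a s hRa) as [A0 [R0 [hA0 [hV [hR0 [hs hsub]]]]]].
exists A0, P, R0. split; [apply hV; reflexivity|]. split; auto. split; auto. split; auto.
intros a' b' s' h1 h2 h3. exact (hall b' (a', s') h2 (hsub a' s' h1 h3)).
Qed.

Lemma part2 (X : pstop) (m : X * X -> X) :
  continuous (prod_conv (pconv X) (pconv X)) (pconv X) m ->
  continuous (prod_conv (pi0epi_conv X) (pi0epi_conv X)) (pi0epi_conv X) (mu X m).
Proof.
intros hm W [C D] hW [h1 h2]. simpl in h1, h2.
intros c hp he hq. destruct he as [J [Y [Z [f hf]]]].
apply hf; [apply push_ultra; auto|]. intros j.
set (e := fun a s => proj1_sig (f j a) s).
assert (Kq : forall V x, is_ultrafilter V -> pconv X V x -> forall s O, topen (Z j) O -> O (e (pcls X x) s) ->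
   exists P R, V P /\ topen (Y j) R /\ R s /\ forall x' s', P x' -> R s' -> O (e (pcls X x') s')).
{ intros V x hV hx s O hO hOs.
  pose proof (proj1 (hf (push (pcls X) V) (pcls X x) (push_ultra _ _ hV)) (hq V x hV hx) j) as hfc.
  destruct (FE _ _ _ (f j) (push (pcls X) V) (pcls X x) (push_filter _ _ (uf_filter _ hV)) hfc s O hO hOs)
    as [P [R [hP [hR [hRs hall]]]]].
  exists (fun x' => P (pcls X x')), R. split; auto. split; auto. split; auto.
  intros x' s' a b. apply hall; auto. }
assert (Kxx : forall V1 x1 V2 x2, is_ultrafilter V1 -> pconv X V1 x1 -> is_ultrafilter V2 -> pconv X V2 x2 ->
   forall s O, topen (Z j) O -> O (e (pcls X (m (x1, x2))) s) ->
   exists P Q R, V1 P /\ V2 Q /\ topen (Y j) R /\ R s /\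
     forall a b s', P a -> Q b -> R s' -> O (e (pcls X (m (a, b))) s')).
{ intros V1 x1 V2 x2 hV1 hx1 hV2 hx2 s O hO hOs. apply NNPP; intro hn.
  set (F := fun Sx : X * X -> Prop => exists A B R, V1 A /\ V2 B /\ topen (Y j) R /\ R s /\
     forall a b, A a -> B b -> (exists s', R s' /\ ~ O (e (pcls X (m (a, b))) s')) -> Sx (a, b)).
  assert (hF : is_filter F).
  { unfold F. split; [|split; [|split]].
    - exists (fun _ => True), (fun _ => True), (fun _ => True).
      split; [apply f_true, uf_filter, hV1|]. split; [apply f_true, uf_filter, hV2|].
      split; [apply topen_full|]. auto.
    - intros P Q [A [B [R [k1 [k2 [k3 [k4 k5]]]]]]] hPQ. exists A, B, R. repeat split; auto.
    - intros P Q [A [B [R [k1 [k2 [k3 [k4 k5]]]]]]] [A' [B' [R' [l1 [l2 [l3 [l4 l5]]]]]]].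
      exists (fun a => A a /\ A' a), (fun a => B a /\ B' a), (fun a => R a /\ R' a).
      split; [apply f_inter; auto; apply uf_filter; auto|].
      split; [apply f_inter; auto; apply uf_filter; auto|].
      split; [apply topen_inter; auto|]. split; [auto|].
      intros a b [] [] [s' [[r r'] hno]]. split; [apply k5 | apply l5]; eauto.
    - intros [A [B [R [k1 [k2 [k3 [k4 k5]]]]]]]. apply hn. exists A, B, R.
      repeat split; auto. intros a b s' ha hb hr. apply NNPP; intro hno. apply (k5 a b ha hb); eauto. }
  destruct (UFL F hF) as [V [hV hsub]].
  assert (M1 : push fst V = V1).
  { apply setsys_ext; intros S. apply ultra_sub; auto; [apply push_ultra; auto|].
    intros S0 hS0. apply hsub. exists S0, (fun _ => True), (fun _ => True).
    split; auto. split; [apply f_true, uf_filter, hV2|]. split; [apply topen_full|]. auto. }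
  assert (M2 : push snd V = V2).
  { apply setsys_ext; intros S. apply ultra_sub; auto; [apply push_ultra; auto|].
    intros S0 hS0. apply hsub. exists (fun _ => True), S0, (fun _ => True).
    split; [apply f_true, uf_filter, hV1|]. split; auto. split; [apply topen_full|]. auto. }
  assert (pm : pconv X (push m V) (m (x1, x2))).
  { apply (hm V (x1, x2) hV). split; simpl; [rewrite M1 | rewrite M2]; auto. }
  destruct (Kq (push m V) (m (x1, x2)) (push_ultra _ _ hV) pm s O hO hOs) as [P [R [hP [hR [hRs hall]]]]].
  assert (hbad : V (fun p => exists s', R s' /\ ~ O (e (pcls X (m p)) s'))).
  { apply (f_mono V (uf_filter _ hV) (fun p => exists s', R s' /\ ~ O (e (pcls X (m (fst p, snd p))) s'))).
    - apply hsub. exists (fun _ => True), (fun _ => True), R.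
      split; [apply f_true, uf_filter, hV1|]. split; [apply f_true, uf_filter, hV2|]. split; auto.
    - intros [a b]; auto. }
  destruct (f_ne V (uf_filter _ hV) _ (f_inter V (uf_filter _ hV) _ _ hP hbad)) as [p [hp1 [s' [hs' hno]]]].
  apply hno. apply hall; auto. }
assert (G1 : forall Va a Ub b, (is_ultrafilter Va /\ pconv X Va a) -> is_ultrafilter Ub -> pi0epi_conv X Ub b ->
    forall s O, topen (Z j) O -> O (e (mu X m (pcls X a, b)) s) ->
    exists P Q R, Va P /\ Ub Q /\ topen (Y j) R /\ R s /\
      forall a' b' s', P a' -> Q b' -> R s' -> O (e (mu X m (pcls X a', b')) s')).
{ apply (step X (Y j) (Z j) X (fun V x => is_ultrafilter V /\ pconv X V x)
          (fun V x h => uf_filter _ (proj1 h))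
          (fun x => conj (principal_ultra x) (pconv_principal X x))
          (fun x b s => e (mu X m (pcls X x, b)) s)).
  intros Va a V2 x2 [hVa ha] hV2 hx2 s O hO hOs. simpl in hOs. rewrite mu_spec in hOs; auto.
  destruct (Kxx Va a V2 x2 hVa ha hV2 hx2 s O hO hOs) as [P [Q [R [hP [hQ [hR [hRs hall]]]]]]].
  exists P, Q, R. repeat split; auto. intros a' x' s' k1 k2 k3. simpl. rewrite mu_spec; auto. }
assert (G2 : forall Va a Ub b, (is_ultrafilter Va /\ pi0epi_conv X Va a) -> is_ultrafilter Ub -> pi0epi_conv X Ub b ->
    forall s O, topen (Z j) O -> O (e (mu X m (b, a)) s) ->
    exists P Q R, Va P /\ Ub Q /\ topen (Y j) R /\ R s /\
      forall a' b' s', P a' -> Q b' -> R s' -> O (e (mu X m (b', a')) s')).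
{ apply (step X (Y j) (Z j) (pi0 X) (fun V x => is_ultrafilter V /\ pi0epi_conv X V x)
          (fun V x h => uf_filter _ (proj1 h))
          (fun x => conj (principal_ultra x) (fun c hp _ _ => hp x))
          (fun d c s => e (mu X m (c, d)) s)).
  intros Va a V2 x2 [hVa ha] hV2 hx2 s O hO hOs. simpl in hOs.
  destruct (G1 V2 x2 Va a (conj hV2 hx2) hVa ha s O hO hOs) as [P [Q [R [hP [hQ [hR [hRs hall]]]]]]].
  exists Q, P, R. repeat split; auto. }
apply FE'; [apply push_filter, uf_filter; auto|].
intros s O hO hOs.
destruct (G2 (push snd W) D (push fst W) C (conj (push_ultra _ _ hW) h2) (push_ultra _ _ hW) h1 s O hO hOs)
  as [P [Q [R [hP [hQ [hR [hRs hall]]]]]]].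
exists (fun c0 => exists p, Q (fst p) /\ P (snd p) /\ c0 = mu X m p), R. split.
- unfold push. apply (f_mono W (uf_filter _ hW) _ _ (f_inter W (uf_filter _ hW) _ _ hQ hP)).
  intros p [a b]. exists p; auto.
- split; auto. split; auto. intros c0 s' [[p1 p2] [a [b ->]]] hr. exact (hall p2 p1 s' b a hr).
Qed.

Theorem proposition4p7 :
  (forall (X : pstop) (m : X * X -> X),
     continuous (prod_conv (pconv X) (pconv X)) (pconv X) m ->
     exists mu : pi0 X * pi0 X -> pi0 X,
       (forall x y : X, mu (pcls X x, pcls X y) = pcls X (m (x, y))) /\
       continuous (prod_conv (pi0ps_conv X) (pi0ps_conv X)) (pi0ps_conv X) mu)
  /\
  (forall (X : pstop) (m : X * X -> X),
     is_epi (pconv X) ->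
     continuous (prod_conv (pconv X) (pconv X)) (pconv X) m ->
     exists mu : pi0 X * pi0 X -> pi0 X,
       (forall x y : X, mu (pcls X x, pcls X y) = pcls X (m (x, y))) /\
       continuous (prod_conv (pi0epi_conv X) (pi0epi_conv X)) (pi0epi_conv X) mu).
Proof.
split.
- intros X m hm. exists (mu X m). split; [apply mu_spec; auto| apply part1; auto].
- intros X m _ hm. exists (mu X m). split; [apply mu_spec; auto| apply part2; auto].
Qed.
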